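(* Let $\mathcal{S}_0$ and $\mathcal{S}_1$ be two MSyDSs with common node set $V$ such that every local function is a threshold function and every master function is \texttt{OR}. Let $\tau$ be the largest threshold value occurring among the local functions of $\mathcal{S}_0$ and $\mathcal{S}_1$. Then $\mathcal{S}_0$ and $\mathcal{S}_1$ are inequivalent if and only if there is an inequivalence witness for $\mathcal{S}_0$ and $\mathcal{S}_1$ in which at most $\tau$ nodes have state 1.
   Context: A multilayer synchronous dynamical system (MSyDS) $\mathcal{S}$ over $\mathbb{B}=\{0,1\}$ with $k\ge 1$ layers consists of: a finite node set $V$; undirected simple graphs $G_i=(V,E_i)$, $1\le i\le k$ (all layers share the node set $V$); for each layer $i$ and node $v$ a local function $f_{i,v}$ with output in $\mathbb{B}$ whose inputs are the states of the nodes in the closed neighborhood of $v$ in $G_i$ ($v$ and its neighbors in $G_i$); and for each node $v$ a master function $\psi_v:\mathbb{B}^k\to\mathbb{B}$. A configuration is a map $\mathcal{C}:V\to\mathbb{B}$; its successor is $\mathcal{C}'$ with $\mathcal{C}'(v)=\psi_v(f_{1,v}(\mathcal{C}),\dots,f_{k,v}(\mathcal{C}))$ for all $v$ (synchronous update), where $f_{i,v}(\mathcal{C})$ is $f_{i,v}$ evaluated on the states in $\mathcal{C}$ of the closed neighborhood of $v$ in $G_i$. For an integer $t\ge 0$, the $t$-threshold function equals 1 iff at least $t$ of its inputs equal 1; a threshold local function is specified by its threshold $t$. \texttt{OR} is 1 iff at least one input is 1. Two MSyDSs on the same node set are equivalent if every configuration has the same successor under both (i.e., their phase spaces are identical), and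 inequivalent otherwise. An inequivalence witness for two MSyDSs on node set $V$ is a configuration of $V$ whose successors under the two systems differ. *)

(* Defs.v *)
From mathcomp Require Import all_boot.
Unset Printing Implicit Defensive.

(* Layer i (i : 'I_k) has simple undirected graph
   [layer i] (symmetric, irreflexive relation on V) and the local function
   of node v in layer i is the [thr i v]-threshold function on the states of
   the closed neighbourhood of v in layer i. *)
Record ThrOrMSyDS (V : finType) := {
  nlayers : nat;
  nlayers_pos : 0 < nlayers;
  layer : 'I_nlayers -> rel V;
  layer_sym : forall i, symmetric (layer i);
  layer_irr : forall i, irreflexive (layer i);
  thr : 'I_nlayers -> V -> nat
}.
Arguments nlayers {V}.
Arguments layer {V} _ _.
Arguments thr {V} _ _ _.
Arguments nlayers_pos {V}.
Arguments layer_sym {V}.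
Arguments layer_irr {V}.

(* configurations: maps V -> B, with B = bool (true = 1) *)
Definition config (V : finType) := V -> bool.

Definition closed_nbhd {V : finType} (S : ThrOrMSyDS V) (i : 'I_(nlayers S)) (v : V) : {set V} :=
  [set u | (u == v) || layer S i v u].

Definition local_fun {V : finType} (S : ThrOrMSyDS V) (i : 'I_(nlayers S)) (v : V)
  (C : config V) : bool :=
  thr S i v <= #|[set u in closed_nbhd S i v | C u]|.

Definition successor {V : finType} (S : ThrOrMSyDS V) (C : config V) : config V :=
  fun v => [exists i : 'I_(nlayers S), local_fun S i v C].

Definition equivalent {V : finType} (S0 S1 : ThrOrMSyDS V) : Prop :=
  forall C : config V, forall v, successor S0 C v = successor S1 C v.

Definition inequivalence_witness {V : finType} (S0 S1 : ThrOrMSyDS V) (C : config V) : Prop :=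
  exists v, successor S0 C v <> successor S1 C v.

Definition num_ones {V : finType} (C : config V) : nat := #|[set v | C v]|.

Definition max_thr {V : finType} (S : ThrOrMSyDS V) : nat :=
  \max_(i : 'I_(nlayers S)) \max_(v : V) thr S i v.

Definition tau {V : finType} (S0 S1 : ThrOrMSyDS V) : nat := maxn (max_thr S0) (max_thr S1).

(* Main.v *)
Require Import Defs.
From mathcomp Require Import all_boot.
From Stdlib Require Import Classical.

Lemma thr_le_max {V : finType} (S : ThrOrMSyDS V) i v : thr S i v <= max_thr S.
Proof.
rewrite /max_thr.
apply: leq_trans (leq_bigmax_cond _ (isT : predT i)).
exact: (leq_bigmax_cond _ (isT : predT v)).
Qed.

Lemma key {V : finType} (S0 S1 : ThrOrMSyDS V) (C : config V) v :
  successor S0 C v = true -> successor S1 C v = false ->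
  exists C' : config V, inequivalence_witness S0 S1 C' /\ num_ones C' <= max_thr S0.
Proof.
move=> /existsP [i Hi] H1.
set B := [set u in closed_nbhd S0 i v | C u].
set t := thr S0 i v.
have Ht : t <= #|B| by [].
set A := [set x | x \in take t (enum B)].
have cardA : #|A| = t.
  rewrite /A cardsE (card_uniqP _); last by apply: take_uniq; apply: enum_uniq.
  by rewrite size_take -cardE; case: ltngtP Ht => // ->.
have AB : A \subset B.
  apply/subsetP => x; rewrite inE => /mem_take; by rewrite mem_enum.
pose C' := fun x => x \in A.
exists C'; split; last first.
  rewrite /num_ones.
  have -> : [set x | C' x] = A by apply/setP => x; rewrite inE.
  by rewrite cardA thr_le_max.
exists v.
have -> : successor S0 C' v = true.
  apply/existsP; exists i; rewrite /local_fun -/t -{1}cardA.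
  apply: subset_leq_card; apply/subsetP => x xA.
  rewrite inE /C' xA andbT.
  by move/subsetP: AB => /(_ x xA); rewrite inE => /andP [].
have -> : successor S1 C' v = false.
  apply/negbTE/existsP => [[j Hj]].
  move/negbT: H1 => /existsPn /(_ j); rewrite /local_fun.
  move: Hj; rewrite /local_fun => Hj; apply/negP/negPn.
  apply: leq_trans Hj _; apply: subset_leq_card; apply/subsetP => x.
  rewrite !inE /C' => /andP [-> xA] /=.
  by move/subsetP: AB => /(_ x xA); rewrite inE => /andP [].
by [].
Qed.

Theorem lemma5p2 (V : finType) (S0 S1 : ThrOrMSyDS V) :
  ~ equivalent S0 S1 <->
  exists C : config V, inequivalence_witness S0 S1 C /\ num_ones C <= tau S0 S1.
Proof.
split; last first.
  by move=> [C [[v Hv] _]] E; apply: Hv; apply: E.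
move=> NE.
have [C [v Hv]] : exists C, exists v, successor S0 C v <> successor S1 C v.
  apply: NNPP => H; apply: NE => C v; apply: NNPP => H'; apply: H; by exists C, v.
case E0: (successor S0 C v) Hv; case E1: (successor S1 C v) => // _.
  have [C' [W Hn]] := key _ _ _ _ E0 E1; exists C'; split => //.
  by apply: leq_trans Hn (leq_maxl _ _).
have [C' [[w Hw] Hn]] := key _ _ _ _ E1 E0; exists C'; split.
  by exists w => H; apply: Hw; rewrite H.
by apply: leq_trans Hn (leq_maxr _ _).
Qed.
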